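(* Let $G$ be a Carnot group, let $D_G$ be the dimension provided by the theorem that for every $0<\varepsilon<1/2$, $(G,d_G^{1-\varepsilon})$ embeds into $\mathbb{R}^{D_G}$ with distortion $O_G(\varepsilon^{-1/2})$. Let $\Gamma\subset G$ be a discrete subgroup such that $d_G(\gamma_1,\gamma_2)\ge 1$ for all distinct $\gamma_1,\gamma_2\in\Gamma$. For $R\ge 2$ let $B_\Gamma(0,R)=\{\gamma\in\Gamma: d_G(0,\gamma)<R\}$, where $0$ is the identity of $G$. Then $(B_\Gamma(0,R),d_G)$ admits an embedding into $\mathbb{R}^{D_G}$ with distortion $O_G(\log^{1/2}R)$.
   Context: A Carnot group $G$ is a connected, simply connected Lie group with stratified Lie algebra $\mathfrak g=V_1\oplus\cdots\oplus V_s$, $V_{r+1}=[V_1,V_r]$, $V_{s+1}=0$, with a norm on $V_1$; $d_G$ is the associated Carnot–Carathéodory distance (infimum of lengths of horizontal piecewise smooth curves). A map $f:(X,d_X)\to(Y,d_Y)$ has distortion at most $D$ if there is $C>0$ with $Cd_X(x_1,x_2)\le d_Y(f(x_1),f(x_2))\le CDd_X(x_1,x_2)$ for all $x_1,x_2$. *)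

(* Defs.v *)
From HB Require Import structures.
From mathcomp Require Import all_boot all_order all_algebra.
From mathcomp Require Import all_classical all_reals all_analysis.
Set Implicit Arguments. Unset Strict Implicit. Unset Printing Implicit Defensive.
Import Order.TTheory GRing.Theory Num.Theory.
Import numFieldNormedType.Exports.
Local Open Scope classical_set_scope.
Local Open Scope ring_scope.

Fixpoint Ck (R : realType) (V W : normedModType R) (k : nat) (f : V -> W) : Prop :=
  match k with
  | 0 => continuous f
  | k'.+1 => (forall x v, derivable f x v) /\
             (forall v, @Ck R V W k' (fun x => 'D_v f x))
  end.

Definition smooth (R : realType) (V W : normedModType R) (f : V -> W) :=
  forall k, @Ck R V W k f.

Definition is_group_law (R : realType) (n : nat)
  (mul : 'rV[R]_n -> 'rV[R]_n -> 'rV[R]_n) (inv : 'rV[R]_n -> 'rV[R]_n) :=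
  [/\ associative mul, left_id 0 mul, right_id 0 mul,
      (forall x, mul (inv x) x = 0) & (forall x, mul x (inv x) = 0)].

(* Lie bracket of the Lie algebra T_0 G = R^n: mixed second derivative of
   the (group) commutator expression at the identity. *)
Definition bracket (R : realType) (n : nat)
  (mul : 'rV[R]_n -> 'rV[R]_n -> 'rV[R]_n) (x y : 'rV[R]_n) : 'rV[R]_n :=
  derive1 (fun s : R => derive1 (fun t : R =>
     mul (s *: x) (t *: y) - mul (t *: y) (s *: x)) 0) 0.

Definition dL (R : realType) (n : nat)
  (mul : 'rV[R]_n -> 'rV[R]_n -> 'rV[R]_n) (g v : 'rV[R]_n) : 'rV[R]_n :=
  derive1 (fun t : R => mul g (t *: v)) 0.

(* Carnot group structure on R^n (exponential coordinates):
   - mul is a smooth group law with identity 0 (so G is a connected, simply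
     connected Lie group);
   - lines through 0 are one-parameter subgroups (exponential coordinates);
   - Lie algebra = V_1 (+) ... (+) V_s, V_{r+1} = [V_1, V_r], V_{s+1} = 0;
   - N is a norm on V_1. *)
Definition is_carnot (R : realType) (n : nat)
  (mul : 'rV[R]_n -> 'rV[R]_n -> 'rV[R]_n) (inv : 'rV[R]_n -> 'rV[R]_n)
  (s : nat) (Vs : nat -> {vspace 'rV[R]_n}) (N : 'rV[R]_n -> R) : Prop :=
  [/\ is_group_law mul inv,
      smooth (fun z : 'rV[R]_(n + n) => mul (lsubmx z) (rsubmx z)),
      (forall x (a b : R), mul (a *: x) (b *: x) = (a + b) *: x),
      (1 <= s)%N &
   [/\ [/\ (\sum_(1 <= r < s.+1) Vs r)%VS = fullv,
          \dim (\sum_(1 <= r < s.+1) Vs r)%VS = (\sum_(1 <= r < s.+1) \dim (Vs r))%N,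
          (forall r, (1 <= r <= s)%N ->
             Vs r.+1 = <<[seq bracket mul a b | a <- vbasis (Vs 1%N), b <- vbasis (Vs r)]>>%VS)
        & Vs s.+1 = 0%VS] &
      [/\ (forall a b, a \in Vs 1%N -> b \in Vs 1%N -> N (a + b) <= N a + N b),
          (forall (c : R) a, a \in Vs 1%N -> N (c *: a) = `|c| * N a)
        & (forall a, a \in Vs 1%N -> N a = 0 -> a = 0)]]].

(* Breakpoints
   0 = p_0 < p_1 < ... < p_k = 1 with (p_1,...,p_k) = tt; on the i-th piece
   gam'(t) = dL_{gam t} (h i t) with h i a continuous V_1-valued control. *)
Definition piece (R : realType) (tt : seq R) (i : nat) : set R :=
  [set t | nth 0 (0 :: tt) i <= t <= nth 0 (0 :: tt) i.+1].

Definition opiece (R : realType) (tt : seq R) (i : nat) : set R :=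
  [set t | nth 0 (0 :: tt) i < t < nth 0 (0 :: tt) i.+1].

Definition horizontal (R : realType) (n : nat)
  (mul : 'rV[R]_n -> 'rV[R]_n -> 'rV[R]_n) (V1 : {vspace 'rV[R]_n})
  (gam : R -> 'rV[R]_n) (tt : seq R) (h : nat -> R -> 'rV[R]_n) : Prop :=
  [/\ path <%R 0 tt, last 0 tt = 1,
      {within [set t : R | 0 <= t <= 1], continuous gam} &
      forall i, (i < size tt)%N ->
        [/\ {within piece tt i, continuous (h i)},
            (forall t, piece tt i t -> h i t \in V1) &
            (forall t, opiece tt i t -> is_derive t 1 gam (dL mul (gam t) (h i t)))]].

Definition hlength (R : realType) (n : nat) (N : 'rV[R]_n -> R)
  (tt : seq R) (h : nat -> R -> 'rV[R]_n) : R :=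
  \sum_(i < size tt) Rintegral lebesgue_measure (piece tt i) (fun t => N (h i t)).

Definition ccdist (R : realType) (n : nat)
  (mul : 'rV[R]_n -> 'rV[R]_n -> 'rV[R]_n) (Vs : nat -> {vspace 'rV[R]_n})
  (N : 'rV[R]_n -> R) (x y : 'rV[R]_n) : R :=
  inf [set l : R | exists gam tt h,
        [/\ gam 0 = x, gam 1 = y, horizontal mul (Vs 1%N) gam tt h
          & l = hlength N tt h]].

Definition enorm (R : realType) (D : nat) (v : 'rV[R]_D) : R :=
  Num.sqrt (\sum_(i < D) v ord0 i ^+ 2).

Definition distortion_le (R : realType) (X : Type) (D : nat) (A : set X)
  (dX : X -> X -> R) (f : X -> 'rV[R]_D) (K : R) : Prop :=
  exists c : R, 0 < c /\ forall x y, A x -> A y ->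
    c * dX x y <= enorm (f x - f y) <= c * K * dX x y.

Definition sep_discrete_subgroup (R : realType) (n : nat)
  (mul : 'rV[R]_n -> 'rV[R]_n -> 'rV[R]_n) (inv : 'rV[R]_n -> 'rV[R]_n)
  (d : 'rV[R]_n -> 'rV[R]_n -> R) (Gam : set 'rV[R]_n) : Prop :=
  [/\ Gam 0,
      (forall x y, Gam x -> Gam y -> Gam (mul x y)),
      (forall x, Gam x -> Gam (inv x)),
      (forall x, Gam x -> exists2 e : R, 0 < e &
         forall y, Gam y -> ball x e y -> y = x) &
      (forall x y, Gam x -> Gam y -> x <> y -> 1 <= d x y)].

(* Main.v *)
Require Import Defs.
From HB Require Import structures.
From mathcomp Require Import all_boot all_order all_algebra.
From mathcomp Require Import all_classical all_reals all_analysis.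
Import Order.TTheory GRing.Theory Num.Theory.
Local Open Scope classical_set_scope.
Local Open Scope ring_scope.
From mathcomp Require Import ring lra.

Section E.
Variables (R : realType) (D : nat).

Lemma enorm_ge0 (u : 'rV[R]_D) : 0 <= enorm u.
Proof. exact: sqrtr_ge0. Qed.

Lemma enorm0 : enorm (0 : 'rV[R]_D) = 0.
Proof. by rewrite /enorm big1 ?sqrtr0// => i _; rewrite mxE expr0n. Qed.

Lemma enormB (u v : 'rV[R]_D) : enorm (u - v) = enorm (v - u).
Proof. by rewrite /enorm; congr Num.sqrt; apply: eq_bigr => i _; rewrite !mxE; ring. Qed.

Lemma enormD (u v : 'rV[R]_D) : enorm (u + v) <= enorm u + enorm v.
Proof.
rewrite /enorm.
set A := \sum_(i < D) u ord0 i ^+ 2.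
set B := \sum_(i < D) v ord0 i ^+ 2.
set S := \sum_(i < D) u ord0 i * v ord0 i.
have A0 : 0 <= A by apply: sumr_ge0 => i _; exact: sqr_ge0.
have B0 : 0 <= B by apply: sumr_ge0 => i _; exact: sqr_ge0.
set a := Num.sqrt A; set b := Num.sqrt B.
have a0 : 0 <= a by exact: sqrtr_ge0.
have b0 : 0 <= b by exact: sqrtr_ge0.
have aa : a ^+ 2 = A by rewrite sqr_sqrtr.
have bb : b ^+ 2 = B by rewrite sqr_sqrtr.
have E1 : \sum_(i < D) (u + v) ord0 i ^+ 2 = A + 2 * S + B.
  rewrite /A /B /S mulr_sumr -!big_split /=; apply: eq_bigr => i _; rewrite mxE; ring.
have E2 : \sum_(i < D) (u ord0 i * b - v ord0 i * a) ^+ 2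
          = b ^+ 2 * A - 2 * a * b * S + a ^+ 2 * B.
  rewrite /A /B /S !mulr_sumr -sumrB -big_split /=; apply: eq_bigr => i _; ring.
have E2ge : 0 <= \sum_(i < D) (u ord0 i * b - v ord0 i * a) ^+ 2.
  by apply: sumr_ge0 => i _; exact: sqr_ge0.
have key : S <= a * b.
  have [ab0|abpos] := eqVneq (a * b) 0.
    have : (a == 0) || (b == 0) by rewrite -mulf_eq0 ab0.
    case/orP => /eqP z.
      have : A = 0 by rewrite -aa z expr0n.
      move/eqP; rewrite psumr_eq0 => [/allP Hu|i _]; last exact: sqr_ge0.
      rewrite ab0 /S big1 // => i _.
      have := Hu i (mem_index_enum _); rewrite sqrf_eq0 => /eqP ->; by rewrite mul0r.
    have : B = 0 by rewrite -bb z expr0n.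
    move/eqP; rewrite psumr_eq0 => [/allP Hu|i _]; last exact: sqr_ge0.
    rewrite ab0 /S big1 // => i _.
    have := Hu i (mem_index_enum _); rewrite sqrf_eq0 => /eqP ->; by rewrite mulr0.
  have abp : 0 < a * b by rewrite lt_def abpos mulr_ge0.
  move: E2ge; rewrite E2 -aa -bb => h.
  have : 0 <= (a * b) * (2 * (a * b - S)).
    by move: h; set t := _ * _ - _ + _; have -> : t = (a * b) * (2 * (a * b - S)) by rewrite /t; ring.
  rewrite pmulr_rge0 // pmulr_rge0 //; lra.
rewrite E1 -(@ger0_norm _ (a + b)) ?addr_ge0 // -sqrtr_sqr ler_sqrt; last first.
  exact: sqr_ge0.
rewrite sqrrD aa bb; lra.
Qed.
End E.

Lemma ln2_ge (R : realType) : 2^-1 <= ln (2 : R).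
Proof.
have := expR_ge1Dx (- ln (2:R)).
rewrite expRN lnK ?posrE //; lra.
Qed.

Theorem mainTheorem2 (R : realType) (n : nat)
  (mul : 'rV[R]_n -> 'rV[R]_n -> 'rV[R]_n) (inv : 'rV[R]_n -> 'rV[R]_n)
  (s : nat) (Vs : nat -> {vspace 'rV[R]_n}) (N : 'rV[R]_n -> R)
  (D : nat) (C0 : R) :
  is_carnot mul inv s Vs N ->
  (forall eps : R, 0 < eps < 1 / 2 ->
     exists f : 'rV[R]_n -> 'rV[R]_D,
       distortion_le setT (fun x y => powR (ccdist mul Vs N x y) (1 - eps)) f
         (C0 / Num.sqrt eps)) ->
  exists C : R, forall (Gam : set 'rV[R]_n) (r : R),
    sep_discrete_subgroup mul inv (ccdist mul Vs N) Gam -> 2 <= r ->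
    exists f : 'rV[R]_n -> 'rV[R]_D,
      distortion_le [set g | Gam g /\ ccdist mul Vs N 0 g < r]
        (ccdist mul Vs N) f (C * Num.sqrt (ln r)).
Proof.
move=> _ H.
set d := ccdist mul Vs N.
have [|f0 [c0 [c0pos h0]]] := H (4^-1); first lra.
pose e0 : R := 1 - 4^-1.
set M := `|C0 / Num.sqrt 4^-1|.
have M0 : 0 <= M by exact: normr_ge0.
have h0' : forall x y, c0 * powR (d x y) e0 <= enorm (f0 x - f0 y)
                              <= c0 * M * powR (d x y) e0.
  move=> x y; have /andP[h1 h2] := h0 x y I I; rewrite -/e0 in h1 h2.
  rewrite h1 /= (le_trans h2) //; apply: ler_wpM2r; first exact: powR_ge0.
  by apply: ler_wpM2l; [exact: ltW | exact: ler_norm].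
have dxx : forall x, d x x = 0.
  move=> x; have /andP[h1 _] := h0' x x.
  move: h1; rewrite subrr enorm0 => h1.
  apply: (@powR_eq0_eq0 _ _ e0); apply/eqP; rewrite eq_le powR_ge0 andbT.
  by rewrite -(pmulr_rle0 _ c0pos).
pose q := e0^-1.
set A := powR (2 * M) q.
set A' := Num.max 1 A.
set B := A' * expR 1.
have A0 : 0 <= A by exact: powR_ge0.
have A'1 : 1 <= A' by rewrite le_max lexx.
have B0 : 0 < B by rewrite mulr_gt0 ?expR_gt0 //; lra.
exists (B * `|C0| * Num.sqrt 7).
move=> Gam r [G0 _ _ _ Gsep] r2.
have r0 : 0 < r by lra.
have dge1 : forall x y, Gam x -> Gam y -> x <> y -> 1 <= d x y by [].
have dge0 : forall x y, Gam x -> Gam y -> 0 <= d x y.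
  move=> x y Gx Gy; have [->|xy] := eqVneq x y; first by rewrite dxx.
  have xy' : x <> y by move=> e; move: xy; rewrite e eqxx.
  have := Gsep x y Gx Gy xy'.
  rewrite -/d; lra.
have bound : forall x y, Gam x -> Gam y -> d 0 x < r -> d 0 y < r ->
    d x y <= A * r.
  move=> x y Gx Gy rx ry.
  have e00 : 0 <= e0 by rewrite /e0; lra.
  have p0x : powR (d 0 x) e0 <= powR r e0.
    apply: (ge0_ler_powR e00); rewrite ?nnegrE; [exact: dge0|exact: ltW|exact: ltW].
  have p0y : powR (d 0 y) e0 <= powR r e0.
    apply: (ge0_ler_powR e00); rewrite ?nnegrE; [exact: dge0|exact: ltW|exact: ltW].
  have /andP[l1 _] := h0' x y.
  have /andP[_ u1] := h0' 0 x.
  have /andP[_ u2] := h0' 0 y.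
  have tri : enorm (f0 x - f0 y) <= enorm (f0 0 - f0 x) + enorm (f0 0 - f0 y).
    rewrite (@enormB _ _ (f0 0) (f0 x)).
    have -> : f0 x - f0 y = (f0 x - f0 0) + (f0 0 - f0 y) by rewrite addrA subrK.
    exact: enormD.
  have cM : 0 <= c0 * M by apply: mulr_ge0 => //; exact: ltW.
  have k1 : c0 * M * powR (d 0 x) e0 <= c0 * M * powR r e0 by apply: ler_wpM2l.
  have k2 : c0 * M * powR (d 0 y) e0 <= c0 * M * powR r e0 by apply: ler_wpM2l.
  have pxy : powR (d x y) e0 <= 2 * M * powR r e0.
    rewrite -(ler_pM2l c0pos); apply: (le_trans l1); apply: (le_trans tri).
    have -> : c0 * (2 * M * powR r e0) = c0 * M * powR r e0 + c0 * M * powR r e0 by ring.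
    apply: lerD; [exact: le_trans u1 k1 | exact: le_trans u2 k2].
  have e0n : e0 != 0 by rewrite /e0; apply/eqP; lra.
  have -> : d x y = powR (powR (d x y) e0) q.
    by rewrite -powRrM mulfV // powRr1 // dge0.
  have q0 : 0 <= q by rewrite /q invr_ge0.
  apply: (le_trans (ge0_ler_powR q0 _ _ pxy)); rewrite ?nnegrE ?powR_ge0 //.
    by apply: mulr_ge0; [apply: mulr_ge0 | exact: powR_ge0].
  rewrite powRM ?powR_ge0 ?mulr_ge0 // -powRrM mulfV // powRr1 // ltW //.
pose L := ln r + 3.
pose eps := L^-1.
have lnr : 2^-1 <= ln r.
  apply: (le_trans (ln2_ge R)); rewrite ler_ln ?posrE //.
have L0 : 0 < L by rewrite /L; lra.
have epsL : eps * L = 1 by rewrite /eps mulVf // gt_eqF.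
have eps0 : 0 < eps by rewrite /eps invr_gt0.
have eps2 : 0 < eps < 1 / 2.
  rewrite eps0 /=; rewrite /L in epsL; nra.
have [f [c [cpos h]]] := H eps eps2.
exists f, (c / B); split; first by rewrite divr_gt0.
move=> x y [Gx rx] [Gy ry].
have [->|xy] := eqVneq x y.
  by rewrite dxx subrr enorm0 !mulr0 lexx.
have xy' : x <> y by move=> e; move: xy; rewrite e eqxx.
have d1 : 1 <= d x y := dge1 x y Gx Gy xy'.
have dA := bound x y Gx Gy rx ry.
have /andP[h1 h2] := h x y I I.
set P := powR (d x y) (1 - eps) in h1 h2 *.
set E := enorm _ in h1 h2 *.
have P0 : 0 <= P by exact: powR_ge0.
have Pd : P <= d x y by apply: ler1_powR => //; lra.
have dPe : d x y = powR (d x y) eps * P.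
  rewrite /P -powRD; first by rewrite addrC subrK powRr1 //; lra.
  by apply/implyP => _; apply/eqP; lra.
have de : powR (d x y) eps <= B.
  apply: (le_trans (_ : _ <= powR (A * r) eps)).
    by apply: ge0_ler_powR; rewrite ?nnegrE ?mulr_ge0 //; lra.
  rewrite powRM //; last lra.
  apply: ler_pM; rewrite ?powR_ge0 //.
    apply: (le_trans (_ : _ <= powR A' eps)).
      by apply: ge0_ler_powR; rewrite ?nnegrE ?le_max ?lexx ?orbT //; lra.
    rewrite -{2}(@powRr1 _ A'); last lra.
    by apply: ler_powR => //; nra.
  rewrite /powR gt_eqF // ler_expR; rewrite /L in epsL; nra.
have Bn : B != 0 by rewrite gt_eqF.
apply/andP; split.
  apply: le_trans h1; rewrite {1}dPe.
  apply: (le_trans (_ : _ <= c / B * (B * P))).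
    apply: ler_wpM2l; first by rewrite ltW // divr_gt0.
    exact: ler_wpM2r.
  by rewrite mulrA divfK.
apply: (le_trans h2).
set s7 := Num.sqrt 7; set sl := Num.sqrt (ln r).
have -> : c / B * (B * `|C0| * s7 * sl) * d x y = c * (`|C0| * (s7 * sl)) * d x y.
  by field.
have K1 : C0 / Num.sqrt eps <= `|C0| * (s7 * sl).
  rewrite /eps sqrtrV; last exact: ltW.
  rewrite invrK.
  apply: (le_trans (_ : _ <= `|C0| * Num.sqrt L)).
    by apply: ler_wpM2r; [exact: sqrtr_ge0 | exact: ler_norm].
  apply: ler_wpM2l => //.
  rewrite /s7 /sl -sqrtrM // ler_sqrt; last by apply: mulr_ge0 => //; lra.
  rewrite /L; lra.
apply: (le_trans (_ : _ <= c * (`|C0| * (s7 * sl)) * P)).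
  by apply: ler_wpM2r => //; apply: ler_wpM2l => //; exact: ltW.
apply: ler_wpM2l => //; apply: mulr_ge0; first exact: ltW.
by apply: mulr_ge0 => //; apply: mulr_ge0; exact: sqrtr_ge0.
Qed.
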